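(* Let $\mathcal{Y}=\{y_1,\dots,y_{n+1}\}\subset\mathbb{R}^n$ be affinely independent, $y_0\in\mathbb{R}^n$, $L>0$, with notation as in the context. Define $M=\operatorname{diag}(\ell_+)\,Y_+P_-(Y_-P_-)^{-1}\in\mathbb{R}^{|\mathcal{I}_+|\times(|\mathcal{I}_-|-1)}$ and real numbers $\{\mu_{ij}\}_{i\in\mathcal{I}_+,\,j\in\mathcal{I}_-}$ by $\mu_{ij}=[M]_{i,\,(j-n-2+|\mathcal{I}_-|)}$ for $(i,j)\in\mathcal{I}_+\times(\mathcal{I}_-\setminus\{0\})$ and $\mu_{i0}=\ell_i-\sum_{j\in\mathcal{I}_-\setminus\{0\}}\mu_{ij}$ for $i\in\mathcal{I}_+$. Then $$\sum_{j\in\mathcal{I}_-}\mu_{ij}=\ell_i\ \ (i\in\mathcal{I}_+),\qquad \sum_{i\in\mathcal{I}_+}\mu_{ij}=-\ell_j\ \ (j\in\mathcal{I}_-),$$ $$(LI-H^\star)\sum_{j\in\mathcal{I}_-}\mu_{ij}y_j=(LI-H^\star)\ell_iy_i\ \ (i\in\mathcal{I}_+),\qquad (LI+H^\star)\sum_{i\in\mathcal{I}_+}\mu_{ij}y_i=-(LI+H^\star)\ell_jy_j\ \ (j\in\mathcal{I}_-).$$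
   Context: The barycentric coordinates of $y_0$ w.r.t. $\mathcal{Y}$ are the unique reals $\ell_1,\dots,\ell_{n+1}$ with $\sum_{i=1}^{n+1}\ell_i=1$, $\sum_{i=1}^{n+1}\ell_iy_i=y_0$; set $\ell_0=-1$. The points are ordered so that $\ell_1\ge\cdots\ge\ell_{n+1}$. Let $\mathcal{I}_+=\{i\in\{0,\dots,n+1\}:\ell_i>0\}=\{1,\dots,|\mathcal{I}_+|\}$, $\mathcal{I}_-=\{i\in\{0,\dots,n+1\}:\ell_i<0\}=\{0\}\cup\{n+3-|\mathcal{I}_-|,\dots,n+1\}$. Let $G=\sum_{i=0}^{n+1}\ell_iy_iy_i^T$, with eigendecomposition $G=P\Lambda P^T$ ($P$ orthogonal, $\Lambda$ diagonal); $G$ has $|\mathcal{I}_+|-1$ positive and $|\mathcal{I}_-|-1$ negative eigenvalues. Let $P_+$ (resp. $P_-$) be the $n\times(|\mathcal{I}_+|-1)$ (resp. $n\times(|\mathcal{I}_-|-1)$) matrix of columns of $P$ belonging to positive (resp. negative) eigenvalues, and $H^\star=L\,P\,\mathrm{sign}(\Lambda)P^T=L(P_+P_+^T-P_-P_-^T)$ (entrywise sign, $\mathrm{sign}(0)=0$). Let $Y\in\mathbb{R}^{(n+1)\times n}$ have $i$th row $(y_i-y_0)^T$; $Y_+$ consists of its first $|\mathcal{I}_+|$ rows and $Y_-$ of its last $|\mathcal{I}_-|-1$ rows. Let $\ell_+=(\ell_1,\dots,\ell_{|\mathcal{I}_+|})^T$. The matrix $Y_-P_-$ is invertible. *)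

(* Defs.v *)
From HB Require Import structures.
From mathcomp Require Import all_boot all_order all_algebra.
Set Implicit Arguments. Unset Strict Implicit. Unset Printing Implicit Defensive.
Import Order.TTheory GRing.Theory Num.Theory.
Local Open Scope ring_scope.

Section Lemma4p3Defs.
Variables (R : realFieldType) (n : nat).

(* Points are indexed by nat: y 0 = y_0, y 1 .. y (n+1) = the set Y.
   Vectors of R^n are column vectors 'cV[R]_n. *)

Definition affinely_independent (y : nat -> 'cV[R]_n) : bool :=
  row_free (\matrix_(i < n) (y i.+2 - y 1%N)^T).

Definition Iplus (ell : nat -> R) : seq nat := [seq i <- iota 0 n.+2 | 0 < ell i].
Definition Iminus (ell : nat -> R) : seq nat := [seq i <- iota 0 n.+2 | ell i < 0].

Definition Gmx (ell : nat -> R) (y : nat -> 'cV[R]_n) : 'M[R]_n :=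
  \sum_(0 <= i < n.+2) ell i *: (y i *m (y i)^T).

Definition Hstar (L : R) (P : 'M[R]_n) (lam : 'rV[R]_n) : 'M[R]_n :=
  L *: (P *m diag_mx (map_mx Num.sg lam) *m P^T).

Definition negidx (lam : 'rV[R]_n) : seq 'I_n := [seq k <- enum 'I_n | lam 0 k < 0].

Definition Pminus (P : 'M[R]_n) (lam : 'rV[R]_n) (m : nat) : 'M[R]_(n, m) :=
  \matrix_(i < n, k < m) P i (nth i (negidx lam) k).

(* Y_+ : first p rows of Y (rows (y_i - y_0)^T, i = 1..p) *)
Definition Yplus (y : nat -> 'cV[R]_n) (p : nat) : 'M[R]_(p, n) :=
  \matrix_(k < p) (y k.+1 - y 0%N)^T.

(* Y_- : last m rows of Y (rows (y_i - y_0)^T, i = n+2-m .. n+1) *)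
Definition Yminus (y : nat -> 'cV[R]_n) (m : nat) : 'M[R]_(m, n) :=
  \matrix_(k < m) (y (n.+2 - m + k)%N - y 0%N)^T.

Definition Mmx (ell : nat -> R) (y : nat -> 'cV[R]_n) (P : 'M[R]_n) (lam : 'rV[R]_n)
  : 'M[R]_(size (Iplus ell), (size (Iminus ell)).-1) :=
  let p := size (Iplus ell) in
  let m := (size (Iminus ell)).-1 in
  diag_mx (\row_(k < p) ell k.+1) *m Yplus y p *m Pminus P lam m
    *m invmx (Yminus y m *m Pminus P lam m).

(* entry (r, c) (0-based) of a matrix, 0 outside the range *)
Definition mxget (a b : nat) (A : 'M[R]_(a, b)) (r c : nat) : R :=
  match @insub _ (fun k => k < a)%N _ r, @insub _ (fun k => k < b)%N _ c with
  | Some r', Some c' => A r' c'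
  | _, _ => 0
  end.

(* mu_{ij} = [M]_{i, j-n-2+|I_-|} (1-based) for j in I_- \ {0};
   mu_{i0} = ell_i - sum_{j in I_- \ {0}} mu_{ij}. *)
Definition mu (ell : nat -> R) (y : nat -> 'cV[R]_n) (P : 'M[R]_n) (lam : 'rV[R]_n)
  (i j : nat) : R :=
  let m := (size (Iminus ell)).-1 in
  let entry (i j : nat) := mxget (Mmx ell y P lam) i.-1 (j - (n.+2 - m))%N in
  if j == 0%N then ell i - \sum_(j' <- Iminus ell | j' != 0%N) entry i j'
  else entry i j.

End Lemma4p3Defs.

(* Main.v *)
Require Import Defs.
From HB Require Import structures.
From mathcomp Require Import all_boot all_order all_algebra.
From mathcomp Require Import zify ring lra.
Set Implicit Arguments. Unset Strict Implicit. Unset Printing Implicit Defensive.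
Import Order.TTheory GRing.Theory Num.Theory.
Local Open Scope ring_scope.
Lemma filter_down (a : pred nat) l s :
  (forall i j, (s <= i)%N -> (i <= j)%N -> (j < s + l)%N -> a j -> a i) ->
  filter a (iota s l) = iota s (count a (iota s l)).
Proof.
elim: l s => [//|l IH] s H /=.
have IH' : filter a (iota s.+1 l) = iota s.+1 (count a (iota s.+1 l)).
  apply: IH => i j h1 h2 h3; apply: H => //; lia.
case: ifP => as_ /=.
  by rewrite IH'.
rewrite IH' add0n.
case E: (count a (iota s.+1 l)) => [//|c].
have : s.+1 \in filter a (iota s.+1 l) by rewrite IH' E /= inE eqxx.
rewrite mem_filter mem_iota => /andP [hs /andP [_ hl]].
by rewrite (H s s.+1) // in as_; lia.
Qed.

Lemma filter_up (b : pred nat) l s :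
  (forall i j, (s <= i)%N -> (i <= j)%N -> (j < s + l)%N -> b i -> b j) ->
  filter b (iota s l) = iota (s + l - count b (iota s l)) (count b (iota s l)).
Proof.
elim: l s => [|l IH] s H /=; first by [].
have IH' := IH s.+1 (fun i j h1 h2 h3 => H i j (ltnW h1) h2 ltac:(lia)).
case: ifP => bs /=.
  have hall : all b (iota s l.+1).
    apply/allP => j; rewrite mem_iota => /andP [h1 h2]; apply: (H s) => //; lia.
  move: (hall) => /= /andP [_ hall'].
  move/all_filterP: (hall') => ->.
  move: hall'; rewrite all_count => /eqP ->; rewrite size_iota.
  by rewrite add1n addnS subSS addnK.
by rewrite IH' add0n addnS.
Qed.

Lemma big_iota_ord (V : zmodType) s c (F : nat -> V) :
  \sum_(i <- iota s c) F i = \sum_(k < c) F (s + k)%N.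
Proof.
elim: c s => [|c IH] s; first by rewrite big_nil big_ord0.
by rewrite /= big_cons big_ord_recl IH addn0; congr (_ + _);
   apply: eq_bigr => k _; rewrite /= addSnnS.
Qed.

Lemma mxgetE (R : realFieldType) a b (A : 'M[R]_(a, b)) r c (hr : (r < a)%N) (hc : (c < b)%N) :
  mxget A r c = A (Ordinal hr) (Ordinal hc).
Proof.
rewrite /mxget (insubT (fun k => (k < a)%N) hr) (insubT (fun k => (k < b)%N) hc).
by [].
Qed.

Section Main.
Variables (R : realFieldType) (n : nat) (y : nat -> 'cV[R]_n)
  (ell : nat -> R) (L : R) (P : 'M[R]_n) (lam : 'rV[R]_n).
Hypotheses  (hY : affinely_independent y)
  (hsum : \sum_(1 <= i < n.+2) ell i = 1)
  (hbar : \sum_(1 <= i < n.+2) ell i *: y i = y 0%N)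
  (h0 : ell 0%N = -1)
  (hord : forall i j : nat, (1 <= i)%N -> (i <= j)%N -> (j <= n.+1)%N -> ell j <= ell i)
  (hP : P^T *m P = 1%:M)
  (hG : Gmx ell y = P *m diag_mx lam *m P^T)
  (hneg : size (negidx lam) = (size (Iminus n ell)).-1)
  (hinv : Yminus y (size (Iminus n ell)).-1 *m Pminus P lam (size (Iminus n ell)).-1
            \in unitmx).

Local Notation p := (size (Iplus n ell)).
Local Notation m := (size (Iminus n ell)).-1.
Local Notation pos := (fun i => 0 < ell i).
Local Notation neg := (fun i => ell i < 0).

Lemma Iplus_filt : Iplus n ell = filter pos (iota 1 n.+1).
Proof. by rewrite /Iplus /= h0 ltr0N1. Qed.

Lemma Iminus_filt : Iminus n ell = 0%N :: filter neg (iota 1 n.+1).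
Proof. by rewrite /Iminus /= h0 ltrN10. Qed.

Lemma Iplus_eq : Iplus n ell = iota 1 p.
Proof.
rewrite Iplus_filt filter_down; last first.
  move=> i j h1 h2 h3 /= hj; apply: lt_le_trans hj _; apply: hord => //; lia.
by rewrite size_iota.
Qed.

Lemma m_eq : m = count neg (iota 1 n.+1).
Proof. rewrite Iminus_filt; exact: size_filter. Qed.

Lemma negs_eq : filter neg (iota 1 n.+1) = iota (n.+2 - m) m.
Proof.
rewrite filter_up; last first.
  move=> i j h1 h2 h3 /= hi; apply: le_lt_trans hi; apply: hord => //; lia.
by rewrite m_eq add1n.
Qed.

Lemma Iminus_eq : Iminus n ell = 0%N :: iota (n.+2 - m) m.
Proof. by rewrite {1}Iminus_filt negs_eq. Qed.

Lemma m_le : (m <= n.+1)%N.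
Proof. by rewrite m_eq; apply: leq_trans (count_size _ _) _; rewrite size_iota. Qed.

Lemma sum_filt2 (V : zmodType) (F : nat -> V) r : (forall i, ell i = 0 -> F i = 0) ->
  \sum_(i <- r) F i = \sum_(i <- filter pos r) F i + \sum_(i <- filter neg r) F i.
Proof.
move=> hF; elim: r => [|a r IH]; first by rewrite !big_nil addr0.
rewrite /= big_cons IH.
case: (ltgtP (ell a) 0) => ha.
- by rewrite big_cons addrCA.
- by rewrite big_cons addrA.
- by rewrite hF // add0r.
Qed.

Lemma sum_split (V : zmodType) (F : nat -> V) : (forall i, ell i = 0 -> F i = 0) ->
  \sum_(1 <= i < n.+2) F i = \sum_(k < p) F k.+1 + \sum_(k < m) F (n.+2 - m + k)%N.
Proof.
move=> hF.
have -> : \sum_(1 <= i < n.+2) F i = \sum_(i <- iota 1 n.+1) F i.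
  by rewrite /index_iota subSS subn0.
rewrite (sum_filt2 _ hF) negs_eq -Iplus_filt Iplus_eq !big_iota_ord.
by rewrite size_iota.
Qed.

Local Notation u i := (y i - y 0%N).

Lemma outerE (v w : 'cV[R]_n) a b : (v *m w^T) a b = v a 0 * w b 0.
Proof. by rewrite !mxE big_ord1 mxE. Qed.

Lemma hbarE a : \sum_(1 <= i < n.+2) ell i * y i a 0 = y 0%N a 0.
Proof.
have := congr1 (fun M : 'cV_n => M a 0) hbar; rewrite /= summxE => <-.
by apply: eq_bigr => i _; rewrite mxE.
Qed.

Lemma G_shift : Gmx ell y = \sum_(1 <= i < n.+2) ell i *: (u i *m (u i)^T).
Proof.
apply/matrixP => a b; rewrite /Gmx !summxE big_ltn // h0.
rewrite mxE.
rewrite (eq_bigr (fun i => ell i * (y i a 0 * y i b 0))); last first.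
  by move=> i _; rewrite mxE outerE.
rewrite [RHS](eq_bigr (fun i => ell i * (y i a 0 * y i b 0) - (ell i * y i a 0) * y 0%N b 0
     - (ell i * y i b 0) * y 0%N a 0 + ell i * (y 0%N a 0 * y 0%N b 0))); last first.
  by move=> i _; rewrite mxE outerE !mxE; ring.
rewrite !big_split /= !sumrN -!mulr_suml hsum !hbarE outerE; ring.
Qed.

Lemma sumrel : \sum_(1 <= i < n.+2) ell i *: u i = 0.
Proof.
rewrite (eq_bigr (fun i => ell i *: y i - ell i *: y 0%N)); last by move=> i _; rewrite scalerBr.
by rewrite big_split /= sumrN -scaler_suml hsum hbar scale1r subrr.
Qed.

Lemma quadE q (f : 'I_q -> nat) (c : 'I_q -> R) :
  (\matrix_(k < q) (u (f k))^T)^T *m diag_mx (\row_k c k) *m (\matrix_(k < q) (u (f k))^T)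
  = \sum_k c k *: (u (f k) *m (u (f k))^T).
Proof.
apply/matrixP => a b; rewrite -mulmxA mul_diag_mx summxE !mxE.
apply: eq_bigr => k _; rewrite !mxE big_ord1 !mxE; ring.
Qed.

Definition Yp := Yplus y p.
Definition Ym := Yminus y m.
Definition Pm := Pminus P lam m.
Definition Kx := invmx (Ym *m Pm).
Definition Dp := diag_mx (\row_(k < p) ell k.+1).
Definition Dm := diag_mx (\row_(k < m) ell (n.+2 - m + k)%N).
Definition Mx := Mmx ell y P lam.

Lemma Mx_def : Mx = Dp *m Yp *m Pm *m Kx.
Proof. by []. Qed.

Lemma G_split : Gmx ell y = Yp^T *m Dp *m Yp + Ym^T *m Dm *m Ym.
Proof.
rewrite G_shift (@sum_split _ (fun i => ell i *: (u i *m (u i)^T))); last first.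
  by move=> i ->; rewrite scale0r.
rewrite /Yp /Ym /Dp /Dm /Yplus /Yminus.
rewrite (quadE (fun k : 'I_p => k.+1) (fun k => ell k.+1)).
rewrite (quadE (fun k : 'I_m => (n.+2 - m + k)%N) (fun k => ell (n.+2 - m + k)%N)).
by [].
Qed.

Lemma sum2_ord (V : zmodType) (F : nat -> V) :
  \sum_(2 <= i < n.+2) F i = \sum_(k < n) F k.+2.
Proof. by rewrite /index_iota subSS subSS subn0 big_iota_ord. Qed.

Lemma relation (a : nat -> R) : \sum_(1 <= i < n.+2) a i *: u i = 0 ->
  forall i, (1 <= i)%N -> (i <= n.+1)%N -> a i = (\sum_(1 <= j < n.+2) a j) * ell i.
Proof.
move=> ha; set s := \sum_(1 <= j < n.+2) a j.
have haE t : \sum_(1 <= i < n.+2) a i * (y i t 0 - y 0%N t 0) = 0.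
  have := congr1 (fun M : 'cV_n => M t 0) ha; rewrite /= summxE mxE => e.
  rewrite -[RHS]e.
  by apply: eq_bigr => i _; rewrite !mxE.
pose x : 'rV[R]_n := \row_(k < n) (a k.+2 - s * ell k.+2).
have hx : x *m (\matrix_(i < n) (y i.+2 - y 1%N)^T) = 0.
  apply/matrixP => o t; rewrite ord1 !mxE.
  have e1 : \sum_(1 <= i < n.+2) (a i - s * ell i) * (y i t 0 - y 1%N t 0) = 0.
    rewrite (eq_bigr (fun i => a i * (y i t 0 - y 0%N t 0) + a i * y 0%N t 0 - a i * y 1%N t 0
       - s * (ell i * y i t 0) + s * ell i * y 1%N t 0)); last by move=> i _; ring.
    rewrite !big_split /= !sumrN haE -!mulr_suml -!mulr_sumr hbarE hsum -/s; ring.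
  rewrite big_ltn // subrr mulr0 add0r sum2_ord in e1.
  by rewrite -[RHS]e1; apply: eq_bigr => k _; rewrite !mxE.
have x0 : x = 0.
  apply: (row_free_inj hY); by rewrite hx mul0mx.
move=> i h1 h2.
case: (ltnP 1 i) => hi.
  have hk : (i - 2 < n)%N by lia.
  have := congr1 (fun M : 'rV_n => M 0 (Ordinal hk)) x0; rewrite /= !mxE.
  have -> : (i - 2).+2 = i by lia.
  by move/eqP; rewrite subr_eq0 => /eqP.
have -> : i = 1%N by lia.
have e2 : s = a 1%N + \sum_(k < n) a k.+2 by rewrite /s big_ltn // sum2_ord.
have e3 : \sum_(k < n) a k.+2 = s * \sum_(k < n) ell k.+2.
  rewrite mulr_sumr; apply: eq_bigr => k _.
  have := congr1 (fun M : 'rV_n => M 0 k) x0; rewrite /= !mxE.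
  by move/eqP; rewrite subr_eq0 => /eqP.
have e4 : 1 = ell 1%N + \sum_(k < n) ell k.+2 by rewrite -hsum big_ltn // sum2_ord.
have e5 : \sum_(k < n) ell k.+2 = 1 - ell 1%N by rewrite e4; ring.
rewrite e5 in e3; rewrite e3 in e2.
rewrite -[X in X = _](addrK (s * (1 - ell 1%N)) (a 1%N)) -e2; ring.
Qed.

Lemma null (z : 'cV[R]_n) : Gmx ell y *m z = 0 ->
  forall i, (1 <= i)%N -> (i <= n.+1)%N -> ell i != 0 -> (u i)^T *m z = 0.
Proof.
move=> hz.
pose sc i := ((u i)^T *m z) 0 0.
have hrel : \sum_(1 <= i < n.+2) (ell i * sc i) *: u i = 0.
  rewrite -[RHS]hz G_shift mulmx_suml; apply: eq_bigr => i _.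
  by rewrite -scalemxAl -mulmxA [(u i)^T *m z]mx11_scalar mul_mx_scalar scalerA.
have hs : \sum_(1 <= j < n.+2) ell j * sc j = 0.
  rewrite /sc (eq_bigr (fun j => \sum_t ell j * (u j t 0 * z t 0))); last first.
    by move=> j _; rewrite !mxE mulr_sumr; apply: eq_bigr => t _; rewrite !mxE.
  rewrite exchange_big /= big1 // => t _.
  rewrite (eq_bigr (fun j => (ell j *: u j) t 0 * z t 0)); last first.
    by move=> j _; rewrite !mxE mulrA.
  by rewrite -mulr_suml -summxE sumrel mxE mul0r.
move=> i h1 h2 hi.
have := relation hrel h1 h2; rewrite hs mul0r => /eqP.
rewrite mulf_eq0 (negbTE hi) /= => /eqP e.
by rewrite [LHS]mx11_scalar -/(sc i) e; apply/matrixP => a b; rewrite !mxE mul0rn.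
Qed.

Lemma inIplus k : (k < p)%N -> ell k.+1 != 0.
Proof.
move=> hk; have : k.+1 \in Iplus n ell by rewrite Iplus_eq mem_iota; lia.
by rewrite Iplus_filt mem_filter => /andP [h _]; rewrite gt_eqF.
Qed.

Lemma inIminus c : (c < m)%N -> ell (n.+2 - m + c)%N != 0.
Proof.
move=> hc; have : (n.+2 - m + c)%N \in filter neg (iota 1 n.+1).
  by rewrite negs_eq mem_iota; lia.
by rewrite mem_filter => /andP [h _]; rewrite lt_eqF.
Qed.

Lemma p_le : (p <= n.+1)%N.
Proof. by rewrite Iplus_filt size_filter; apply: leq_trans (count_size _ _) _; rewrite size_iota. Qed.

Lemma nullY (z : 'cV[R]_n) : Gmx ell y *m z = 0 -> Yp *m z = 0 /\ Ym *m z = 0.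
Proof.
move=> hz; have hm := m_le; have hp := p_le; split; apply/matrixP => k o; rewrite ord1 [RHS]mxE.
- have hk := ltn_ord k.
  have := null hz (ltn0Sn k) ltac:(lia) (inIplus hk).
  move/matrixP => /(_ 0 0); rewrite [RHS]mxE => e; rewrite -[RHS]e.
  by rewrite !mxE; apply: eq_bigr => t _; rewrite !mxE.
- have hk := ltn_ord k.
  have := null hz (_ : 1 <= n.+2 - m + k)%N (_ : n.+2 - m + k <= n.+1)%N (inIminus hk).
  move=> /(_ ltac:(lia) ltac:(lia)).
  move/matrixP => /(_ 0 0); rewrite [RHS]mxE => e; rewrite -[RHS]e.
  by rewrite !mxE; apply: eq_bigr => t _; rewrite !mxE.
Qed.

Lemma PPt : P *m P^T = 1%:M.
Proof. exact: mulmx1C hP. Qed.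

Lemma GP : Gmx ell y *m P = P *m diag_mx lam.
Proof. by rewrite hG -!mulmxA hP mulmx1. Qed.

Lemma PtG : P^T *m Gmx ell y = diag_mx lam *m P^T.
Proof. by rewrite hG !mulmxA hP mul1mx. Qed.

Lemma sel r c : ~~ (lam 0 r < 0) -> (P^T *m Pm) r c = 0.
Proof.
move=> hr; have hc : (c < size (negidx lam))%N by rewrite hneg.
set j := nth r (negidx lam) c.
transitivity ((P^T *m P) r j).
  by rewrite !mxE; apply: eq_bigr => t _; rewrite !mxE (set_nth_default r).
rewrite hP mxE.
have : j \in negidx lam by apply: mem_nth.
rewrite /negidx mem_filter => /andP [hj _].
case: eqP => [e|//]; by move: hr; rewrite e hj.
Qed.

Lemma rowsel r : lam 0 r < 0 -> exists c : 'I_m, forall t, Pm t c = P t r.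
Proof.
move=> hr; have hin : r \in negidx lam by rewrite /negidx mem_filter hr mem_enum.
have hc : (index r (negidx lam) < m)%N by rewrite -hneg index_mem.
exists (Ordinal hc) => t; rewrite !mxE /=.
by rewrite (set_nth_default r) ?nth_index // index_mem.
Qed.

Lemma Hkill (s : R) q (X : 'M[R]_(n, q)) :
  (forall r c, (1 + s * Num.sg (lam 0 r)) * (P^T *m X) r c = 0) ->
  (L%:M + s *: Hstar L P lam) *m X = 0.
Proof.
move=> hX.
have E : L%:M + s *: Hstar L P lam =
    L *: (P *m diag_mx (\row_r (1 + s * Num.sg (lam 0 r))) *m P^T).
  have -> : diag_mx (\row_r (1 + s * Num.sg (lam 0 r))) = 1%:M + s *: diag_mx (map_mx Num.sg lam).
    apply/matrixP => i j; rewrite !mxE; case: eqP => _.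
      by rewrite !mulr1n.
    by rewrite !mulr0n mulr0 addr0.
  rewrite mulmxDr mulmxDl mulmx1 PPt /Hstar -scalemxAr -scalemxAl.
  by rewrite scalerDr scalemx1 !scalerA mulrC.
rewrite E -scalemxAl -!mulmxA.
have -> : diag_mx (\row_r (1 + s * Num.sg (lam 0 r))) *m (P^T *m X) = 0.
  apply/matrixP => r c; rewrite mul_diag_mx mxE [X in X * _]mxE hX.
  by rewrite mxE.
by rewrite mulmx0 scaler0.
Qed.

Lemma YPK : Ym *m Pm *m Kx = 1%:M.
Proof. exact: mulmxV hinv. Qed.

Lemma KYP : Kx *m (Ym *m Pm) = 1%:M.
Proof. exact: mulVmx hinv. Qed.

Definition Wm := Yp^T *m Mx + Ym^T *m Dm.
Definition Vm := Ym^T *m Mx^T - Yp^T *m Dp.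

Lemma W_eq : Wm = Gmx ell y *m Pm *m Kx.
Proof.
rewrite /Wm Mx_def G_split !mulmxDl; congr (_ + _); first by rewrite !mulmxA.
have -> : Ym^T *m Dm *m Ym *m Pm *m Kx = Ym^T *m Dm *m (Ym *m Pm *m Kx) by rewrite !mulmxA.
by rewrite YPK mulmx1.
Qed.

Lemma Wkill : (L%:M + Hstar L P lam) *m Wm = 0.
Proof.
rewrite -[Hstar L P lam]scale1r; apply: Hkill => r c.
rewrite W_eq !mulmxA PtG -!mulmxA (mulmxA P^T) mul_diag_mx mxE mul1r.
case: (ltgtP (lam 0 r) 0) => h.
- by rewrite ltr0_sg // subrr mul0r.
- rewrite [X in _ * (_ * X)]mxE big1 ?mulr0 // => c' _.
  by rewrite sel ?mul0r // lt_gtF.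
- by rewrite h mul0r mulr0.
Qed.

Lemma Vkill : (L%:M - Hstar L P lam) *m Vm = 0.
Proof.
rewrite -scaleN1r; apply: Hkill => r c.
case: (ltgtP (lam 0 r) 0) => h.
- have [c0 hc0] := rowsel h.
  have e0 : Pm^T *m Vm = 0.
    have e : Mx *m (Ym *m Pm) = Dp *m Yp *m Pm by rewrite Mx_def -mulmxA KYP mulmx1.
    rewrite /Vm mulmxBr.
    have -> : Pm^T *m (Ym^T *m Mx^T) = (Mx *m (Ym *m Pm))^T by rewrite !trmx_mul mulmxA.
    have -> : Pm^T *m (Yp^T *m Dp) = (Dp *m Yp *m Pm)^T.
      by rewrite !trmx_mul /Dp tr_diag_mx mulmxA.
    by rewrite e subrr.
  have -> : (P^T *m Vm) r c = (Pm^T *m Vm) c0 c.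
    rewrite [LHS]mxE [RHS]mxE; apply: eq_bigr => t _.
    by rewrite [P^T r t]mxE [Pm^T c0 t]mxE hc0.
  by rewrite e0 mxE mulr0.
- by rewrite gtr0_sg // mulr1 subrr mul0r.
- have hz : Gmx ell y *m col r P = 0.
    apply/matrixP => t o; transitivity ((Gmx ell y *m P) t r).
      by rewrite !mxE; apply: eq_bigr => a _; rewrite !mxE.
    by rewrite GP mul_mx_diag !mxE h mulr0.
  have [h1 h2] := nullY hz.
  have e : (col r P)^T *m Vm = 0.
    by rewrite /Vm mulmxBr !mulmxA -!trmx_mul h1 h2 mulmx0 !trmx0 mul0mx subrr.
  have -> : (P^T *m Vm) r c = ((col r P)^T *m Vm) 0 c.
    rewrite [LHS]mxE [RHS]mxE; apply: eq_bigr => t _.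
    by rewrite [P^T r t]mxE [(col r P)^T 0 t]mxE [col r P t 0]mxE.
  by rewrite e mxE mulr0.
Qed.

Lemma colW_gen (M : 'M[R]_(p, m)) (c : 'I_m) :
  col c (Yp^T *m M + Ym^T *m Dm) =
  \sum_(k < p) M k c *: u k.+1 + ell (n.+2 - m + c)%N *: u (n.+2 - m + c)%N.
Proof.
apply/matrixP => t o; rewrite ord1 /Dm mul_mx_diag !mxE summxE.
congr (_ + _); first by apply: eq_bigr => k _; rewrite !mxE mulrC.
by rewrite mulrC.
Qed.

Lemma colV_gen (M : 'M[R]_(p, m)) (k : 'I_p) :
  col k (Ym^T *m M^T - Yp^T *m Dp) =
  \sum_(c < m) M k c *: u (n.+2 - m + c)%N - ell k.+1 *: u k.+1.
Proof.
apply/matrixP => t o; rewrite ord1 /Dp mul_mx_diag !mxE summxE.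
congr (_ - _); first by apply: eq_bigr => c _; rewrite !mxE mulrC.
by rewrite mulrC.
Qed.

Lemma sum_col q r (A : 'M[R]_(q, r)) c : ((const_mx 1 : 'rV[R]_q) *m A) 0 c = \sum_k A k c.
Proof. by rewrite mxE; apply: eq_bigr => k _; rewrite mxE mul1r. Qed.

Lemma sumrel_split :
  \sum_(k < p) ell k.+1 *: u k.+1 + \sum_(c < m) ell (n.+2 - m + c)%N *: u (n.+2 - m + c)%N = 0.
Proof.
have hF : forall i, ell i = 0 -> ell i *: u i = 0 by move=> i ->; rewrite scale0r.
by rewrite -(@sum_split _ (fun i => ell i *: u i) hF) sumrel.
Qed.

Lemma rowrel : \row_(k < p) ell k.+1 *m Yp = - (\row_(c < m) ell (n.+2 - m + c)%N *m Ym).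
Proof.
apply/matrixP => o t; rewrite ord1.
have := congr1 (fun v : 'cV_n => v t 0) sumrel_split; rewrite /= !mxE !summxE => e.
apply/eqP; rewrite -addr_eq0; apply/eqP; rewrite -[RHS]e /Yp /Ym /Yplus /Yminus.
by congr (_ + _); apply: eq_bigr => k _; rewrite !mxE.
Qed.

Lemma colsum (c : 'I_m) : \sum_(k < p) Mx k c = - ell (n.+2 - m + c)%N.
Proof.
have e1 : const_mx 1 *m Dp = \row_(k < p) ell k.+1.
  by apply/matrixP => o k; rewrite /Dp mul_mx_diag !mxE mul1r.
have e2 : const_mx 1 *m Mx = - \row_(c < m) ell (n.+2 - m + c)%N.
  rewrite Mx_def !mulmxA e1 rowrel !mulNmx -!mulmxA (mulmxA Ym) YPK mulmx1.
  by [].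
have := congr1 (fun A : 'rV_m => A 0 c) e2; rewrite /= sum_col => ->.
by rewrite !mxE.
Qed.

Lemma sumIm (F : nat -> R) :
  \sum_(j <- Iminus n ell | j != 0%N) F j = \sum_(c < m) F (n.+2 - m + c)%N.
Proof.
have hm := m_le.
rewrite {1}Iminus_eq.
transitivity (\sum_(j <- iota (n.+2 - m) m | j != 0%N) F j); first by rewrite big_cons eqxx.
rewrite -big_filter -big_iota_ord; congr bigop.
apply/all_filterP/allP => j; rewrite mem_iota => h; apply/eqP; lia.
Qed.

Lemma hmuE (k : 'I_p) (c : 'I_m) : mu ell y P lam k.+1 (n.+2 - m + c)%N = Mx k c.
Proof.
have hm := m_le.
rewrite /mu; cbv beta zeta.
rewrite ifN; last by apply/eqP; lia.
rewrite addKn (mxgetE _ (ltn_ord k) (ltn_ord c)).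
by congr (Mmx _ _ _ _ _ _); apply: val_inj.
Qed.

Lemma hmu0 (k : 'I_p) : mu ell y P lam k.+1 0%N = ell k.+1 - \sum_(c < m) Mx k c.
Proof.
rewrite /mu; cbv beta zeta; rewrite eqxx sumIm; congr (_ - _).
apply: eq_bigr => c _; rewrite addKn (mxgetE _ (ltn_ord k) (ltn_ord c)).
by congr (Mmx _ _ _ _ _ _); apply: val_inj.
Qed.

Lemma inIp i : i \in Iplus n ell -> exists k : 'I_p, i = k.+1.
Proof.
rewrite {1}Iplus_eq mem_iota => /andP [h1 h2].
have hk : (i.-1 < p)%N by lia.
by exists (Ordinal hk) => /=; lia.
Qed.

Lemma inIm j : j \in Iminus n ell -> j = 0%N \/ exists c : 'I_m, j = (n.+2 - m + c)%N.
Proof.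
have hm := m_le.
rewrite {1}Iminus_eq inE mem_iota => /orP [/eqP ->|/andP [h1 h2]]; first by left.
right; have hc : (j - (n.+2 - m) < m)%N by lia.
by exists (Ordinal hc) => /=; lia.
Qed.

Lemma col_mul q r s (A : 'M[R]_(q, r)) (B : 'M[R]_(r, s)) k : A *m col k B = col k (A *m B).
Proof. by apply/matrixP => a b; rewrite !mxE; apply: eq_bigr => t _; rewrite !mxE. Qed.

Lemma sumIp (V : zmodType) (F : nat -> V) : \sum_(i <- Iplus n ell) F i = \sum_(k < p) F k.+1.
Proof. by rewrite {1}Iplus_eq big_iota_ord. Qed.

Lemma sumIm0 (V : zmodType) (F : nat -> V) :
  \sum_(j <- Iminus n ell) F j = F 0%N + \sum_(c < m) F (n.+2 - m + c)%N.
Proof. by rewrite {1}Iminus_eq big_cons big_iota_ord. Qed.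

Lemma claim1 i : i \in Iplus n ell -> \sum_(j <- Iminus n ell) mu ell y P lam i j = ell i.
Proof.
move=> /inIp [k ->]; rewrite sumIm0 hmu0.
rewrite [X in _ + X](eq_bigr (fun c => Mx k c)); last by move=> c _; rewrite hmuE.
by rewrite subrK.
Qed.

Lemma sum_ell : \sum_(k < p) ell k.+1 + \sum_(c < m) ell (n.+2 - m + c)%N = 1.
Proof. by rewrite -hsum (@sum_split _ ell). Qed.

Lemma claim2 j : j \in Iminus n ell -> \sum_(i <- Iplus n ell) mu ell y P lam i j = - ell j.
Proof.
move=> /inIm [->|[c ->]]; rewrite sumIp.
  rewrite (eq_bigr (fun k : 'I_p => ell k.+1 - \sum_(c < m) Mx k c)); last by move=> k _; rewrite hmu0.
  rewrite sumrB exchange_big /=.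
  rewrite (eq_bigr (fun c : 'I_m => - ell (n.+2 - m + c)%N)); last by move=> c _; rewrite colsum.
  by rewrite sumrN opprK sum_ell h0 opprK.
rewrite (eq_bigr (fun k : 'I_p => Mx k c)); last by move=> k _; rewrite hmuE.
by rewrite colsum.
Qed.

Lemma col0 q (k : 'I_q) : col k (0 : 'M[R]_(n, q)) = 0.
Proof. by apply/matrixP => a b; rewrite !mxE. Qed.

Lemma claim3 i : i \in Iplus n ell ->
  (L%:M - Hstar L P lam) *m (\sum_(j <- Iminus n ell) mu ell y P lam i j *: y j)
  = (L%:M - Hstar L P lam) *m (ell i *: y i).
Proof.
move=> /inIp [k ->].
have e : \sum_(j <- Iminus n ell) mu ell y P lam k.+1 j *: y j = ell k.+1 *: y k.+1 + col k Vm.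
  rewrite sumIm0.
  rewrite (eq_bigr (fun c : 'I_m => Mx k c *: y (n.+2 - m + c)%N)); last by move=> c _; rewrite hmuE.
  rewrite hmu0 /Vm colV_gen.
  set T := \sum_(c < m) Mx k c *: y (n.+2 - m + c)%N.
  set S := \sum_(c < m) Mx k c.
  have hR : \sum_(c < m) Mx k c *: (y (n.+2 - m + c)%N - y 0%N) = T - S *: y 0%N.
    rewrite /T /S scaler_suml -sumrB; apply: eq_bigr => c _; by rewrite scalerBr.
  rewrite hR; apply/matrixP => a b; rewrite !mxE; ring.
by rewrite e mulmxDr col_mul Vkill col0 addr0.
Qed.

Lemma claim4 j : j \in Iminus n ell ->
  (L%:M + Hstar L P lam) *m (\sum_(i <- Iplus n ell) mu ell y P lam i j *: y i)
  = - ((L%:M + Hstar L P lam) *m (ell j *: y j)).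
Proof.
move=> /inIm [->|[c ->]].
  have e : \sum_(i <- Iplus n ell) mu ell y P lam i 0%N *: y i =
      - (ell 0%N *: y 0%N) - \sum_(c < m) col c Wm.
    rewrite sumIp.
    rewrite (eq_bigr (fun k : 'I_p => ell k.+1 *: y k.+1 - \sum_(c < m) Mx k c *: y k.+1));
      last by move=> k _; rewrite hmu0 scalerBl scaler_suml.
    rewrite sumrB exchange_big /=.
    rewrite [in RHS](eq_bigr (fun c : 'I_m => \sum_(k < p) Mx k c *: y k.+1 +
                 ell (n.+2 - m + c)%N *: y (n.+2 - m + c)%N)); last first.
      move=> c _; rewrite /Wm colW_gen.
      have hR : \sum_(k < p) Mx k c *: (y k.+1 - y 0%N) =
          \sum_(k < p) Mx k c *: y k.+1 - (\sum_(k < p) Mx k c) *: y 0%N.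
        rewrite scaler_suml -sumrB; apply: eq_bigr => k _; by rewrite scalerBr.
      rewrite hR colsum; apply/matrixP => a b; rewrite !mxE; ring.
    rewrite big_split /=.
    have hT : \sum_(k < p) ell k.+1 *: y k.+1 =
        y 0%N - \sum_(c < m) ell (n.+2 - m + c)%N *: y (n.+2 - m + c)%N.
      have hF : forall i, ell i = 0 -> ell i *: y i = 0 by move=> i ->; rewrite scale0r.
      by rewrite -hbar (@sum_split _ (fun i => ell i *: y i) hF) addrK.
    rewrite hT h0; apply/matrixP => a b; rewrite !mxE; ring.
  rewrite e mulmxBr mulmx_sumr.
  rewrite (eq_bigr (fun c : 'I_m => 0 : 'cV[R]_n)); last first.
    by move=> c _; rewrite col_mul Wkill col0.
  by rewrite big1 // subr0 mulmxN.
have e : \sum_(i <- Iplus n ell) mu ell y P lam i (n.+2 - m + c)%N *: y i =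
    - (ell (n.+2 - m + c)%N *: y (n.+2 - m + c)%N) + col c Wm.
  rewrite sumIp.
  rewrite (eq_bigr (fun k : 'I_p => Mx k c *: y k.+1)); last by move=> k _; rewrite hmuE.
  rewrite /Wm colW_gen.
  have hR : \sum_(k < p) Mx k c *: (y k.+1 - y 0%N) =
      \sum_(k < p) Mx k c *: y k.+1 - (\sum_(k < p) Mx k c) *: y 0%N.
    rewrite scaler_suml -sumrB; apply: eq_bigr => k _; by rewrite scalerBr.
  rewrite hR colsum; apply/matrixP => a b; rewrite !mxE; ring.
by rewrite e mulmxDr col_mul Wkill col0 addr0 mulmxN.
Qed.

End Main.

Theorem lemma4p3 (R : realFieldType) (n : nat) (y : nat -> 'cV[R]_n)
  (ell : nat -> R) (L : R) (P : 'M[R]_n) (lam : 'rV[R]_n)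
  (hY : affinely_independent y)
  (hsum : \sum_(1 <= i < n.+2) ell i = 1)
  (hbar : \sum_(1 <= i < n.+2) ell i *: y i = y 0%N)
  (h0 : ell 0%N = -1)
  (hord : forall i j : nat, (1 <= i)%N -> (i <= j)%N -> (j <= n.+1)%N -> ell j <= ell i)
  (hL : 0 < L)
  (hP : P^T *m P = 1%:M)
  (hG : Gmx ell y = P *m diag_mx lam *m P^T)
  (hneg : size (negidx lam) = (size (Iminus n ell)).-1)
  (hinv : Yminus y (size (Iminus n ell)).-1 *m Pminus P lam (size (Iminus n ell)).-1
            \in unitmx) :
  let H := Hstar L P lam in
  let mu := mu ell y P lam in
  (forall i, i \in Iplus n ell -> \sum_(j <- Iminus n ell) mu i j = ell i) /\
  (forall j, j \in Iminus n ell -> \sum_(i <- Iplus n ell) mu i j = - ell j) /\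
  (forall i, i \in Iplus n ell ->
     (L%:M - H) *m (\sum_(j <- Iminus n ell) mu i j *: y j) = (L%:M - H) *m (ell i *: y i)) /\
  (forall j, j \in Iminus n ell ->
     (L%:M + H) *m (\sum_(i <- Iplus n ell) mu i j *: y i) = - ((L%:M + H) *m (ell j *: y j))).
Proof.
move=> H mu0; rewrite /H /mu0.
split; [|split; [|split]] => k hk.
- by apply: claim1.
- by apply: claim2.
- by apply: claim3.
- by apply: claim4.
Qed.
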